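(* For a Hausdorff convergence $\xi$ the following are equivalent: (1) $\xi$ is strongly countably $\mathrm{S}_0$-characterized; (2) $\xi\times\tau$ is strongly countably $\mathrm{S}_0$-characterized for every pretopology $\tau$ of countable character; (3) $\xi\times\tau$ has countable $\mathrm{S}_0$-character for every prime metrizable topology $\tau$.
   Context: A convergence $\xi$ on a set $X$ is a relation between filters and points, $x\in\lim_\xi\mathcal{F}$, isotone in $\mathcal{F}$ with $x\in\lim_\xi\{x\}^\uparrow$; $\xi\ge\theta$ means $\lim_\xi\mathcal{F}\subset\lim_\theta\mathcal{F}$ for all $\mathcal{F}$. Hausdorff: each filter has at most one limit. Vicinity filter: intersection of filters converging to $x$; pretopology: $x\in\lim\mathcal{V}_\xi(x)$ for all $x$. $\mathrm{T}\xi$: topology of $\xi$-open sets ($O$ with $\lim_\xi\mathcal{F}\cap O\ne\emptyset\Rightarrow O\in\mathcal{F}$). $x\in\lim_{\mathrm{I}_1\xi}\mathcal{F}$ iff some countably based $\mathcal{H}\le\mathcal{F}$ has $x\in\lim_\xi\mathcal{H}$; countable character: $\xi=\mathrm{I}_1\xi$. The product $\xi\times\tau$: a filter converges to $(x,y)$ iff its projections converge to $x$ and $y$. A point $x$ is isolated if $\{x\}^\uparrow$ is the only filter converging to $x$; a prime convergence has at most one non-isolated point. $\mathrm{Epi}_{\mathrm{I}_1}\xi$ is the coarsest convergence $\theta$ on $|\xi|$ with $\mathrm{T}(\xi\times\tau)=\mathrm{T}(\theta\times\tau)$ for every convergence $\tau$ of countable character; equivalently $\theta\ge\mathrm{Epi}_{\mathrm{I}_1}\xi$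 iff $\theta\times\tau\ge\mathrm{T}(\xi\times\tau)$ for every prime metrizable topology $\tau$. $\xi$ has countable $\mathrm{S}_0$-character if some pretopology $\sigma$ of countable character satisfies $\sigma\ge\xi\ge\mathrm{T}\sigma$; it is strongly countably $\mathrm{S}_0$-characterized if some pretopology $\sigma$ of countable character satisfies $\sigma\ge\xi\ge\mathrm{Epi}_{\mathrm{I}_1}\sigma$. *)

(* Defs.v *)
From Stdlib Require Import Reals Classical.
Open Scope R_scope.

Set Implicit Arguments.

Definition set (X : Type) := X -> Prop.

Definition is_filter (X : Type) (F : set X -> Prop) : Prop :=
  F (fun _ => True) /\
  (forall A B : set X, F A -> F B -> F (fun x => A x /\ B x)) /\
  (forall A B : set X, F A -> (forall x, A x -> B x) -> F B) /\
  ~ F (fun _ => False).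

Definition filter_le (X : Type) (F G : set X -> Prop) : Prop :=
  forall A, F A -> G A.

Definition principal (X : Type) (x : X) : set X -> Prop := fun A => A x.

Definition image_filter (X Y : Type) (f : X -> Y) (F : set X -> Prop) : set Y -> Prop :=
  fun B => F (fun x => B (f x)).

Lemma principal_filter (X : Type) (x : X) : is_filter (principal x).
Proof.
  unfold is_filter, principal; repeat split; auto.
Qed.

Lemma image_is_filter (X Y : Type) (f : X -> Y) (F : set X -> Prop) :
  is_filter F -> is_filter (image_filter f F).
Proof.
  unfold is_filter, image_filter; intros [H1 [H2 [H3 H4]]]; repeat split.
  - apply H3 with (fun _ => True); auto.
  - intros A B HA HB; apply (H2 _ _ HA HB).
  - intros A B HA HAB; apply H3 with (1 := HA); auto.
  - exact H4.
Qed.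

Record convergence (X : Type) := Convergence {
  lim : (set X -> Prop) -> X -> Prop;
  lim_isotone : forall F G x, is_filter F -> is_filter G ->
      filter_le F G -> lim F x -> lim G x;
  lim_centered : forall x, lim (principal x) x
}.
Arguments lim {X} c F x.

Definition conv_ge (X : Type) (xi theta : convergence X) : Prop :=
  forall F x, is_filter F -> lim xi F x -> lim theta F x.

Definition conv_eq (X : Type) (xi theta : convergence X) : Prop :=
  conv_ge xi theta /\ conv_ge theta xi.

Definition hausdorff (X : Type) (xi : convergence X) : Prop :=
  forall F x y, is_filter F -> lim xi F x -> lim xi F y -> x = y.

Definition vicinity (X : Type) (xi : convergence X) (x : X) : set X -> Prop :=
  fun A => forall F, is_filter F -> lim xi F x -> F A.

Definition pretopology (X : Type) (xi : convergence X) : Prop :=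
  forall x, lim xi (vicinity xi x) x.

Definition conv_open (X : Type) (xi : convergence X) (O : set X) : Prop :=
  forall F x, is_filter F -> lim xi F x -> O x -> F O.

Definition T_lim (X : Type) (xi : convergence X) (F : set X -> Prop) (x : X) : Prop :=
  forall O, conv_open xi O -> O x -> F O.

Lemma T_isotone (X : Type) (xi : convergence X) : forall F G x, is_filter F -> is_filter G ->
      filter_le F G -> T_lim xi F x -> T_lim xi G x.
Proof. unfold T_lim, filter_le; auto. Qed.

Lemma T_centered (X : Type) (xi : convergence X) : forall x, T_lim xi (principal x) x.
Proof. unfold T_lim, principal; auto. Qed.

Definition T (X : Type) (xi : convergence X) : convergence X :=
  @Convergence _ (T_lim xi) (@T_isotone _ xi) (@T_centered _ xi).

Definition countably_based (X : Type) (H : set X -> Prop) : Prop :=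
  exists B : nat -> set X,
    forall A, H A <-> exists n, forall x, B n x -> A x.

Definition I1_lim (X : Type) (xi : convergence X) (F : set X -> Prop) (x : X) : Prop :=
  exists H, is_filter H /\ countably_based H /\ filter_le H F /\ lim xi H x.

Lemma I1_isotone (X : Type) (xi : convergence X) : forall F G x, is_filter F -> is_filter G ->
      filter_le F G -> I1_lim xi F x -> I1_lim xi G x.
Proof.
  unfold I1_lim, filter_le; intros F G x _ _ HFG [H [H1 [H2 [H3 H4]]]]; exists H; split; [exact H1|split; [exact H2|split; [intros A HA; apply HFG, H3, HA|exact H4]]].
Qed.

Lemma I1_centered (X : Type) (xi : convergence X) : forall x, I1_lim xi (principal x) x.
Proof.
  intro x; exists (principal x); split; [|split; [|split]].
  - apply principal_filter.
  - exists (fun _ y => y = x); unfold principal; intro A; split.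
    + intro Ha; exists 0%nat; intros y ->; exact Ha.
    + intros [_ Hn]; apply Hn; reflexivity.
  - unfold filter_le; auto.
  - apply lim_centered.
Qed.

Definition I1 (X : Type) (xi : convergence X) : convergence X :=
  @Convergence _ (I1_lim xi) (@I1_isotone _ xi) (@I1_centered _ xi).

Definition countable_character (X : Type) (xi : convergence X) : Prop :=
  conv_eq xi (I1 xi).

Definition prod_lim (X Y : Type) (xi : convergence X) (tau : convergence Y)
  (F : set (X * Y) -> Prop) (p : X * Y) : Prop :=
  lim xi (image_filter fst F) (fst p) /\ lim tau (image_filter snd F) (snd p).

Lemma prod_isotone (X Y : Type) (xi : convergence X) (tau : convergence Y) :
  forall F G p, is_filter F -> is_filter G ->
      filter_le F G -> prod_lim xi tau F p -> prod_lim xi tau G p.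
Proof.
  unfold prod_lim; intros F G p HF HG HFG [H1 H2]; split.
  - apply (lim_isotone xi) with (3 := fun A HA => HFG _ HA) (4 := H1);
      apply image_is_filter; auto.
  - apply (lim_isotone tau) with (3 := fun A HA => HFG _ HA) (4 := H2);
      apply image_is_filter; auto.
Qed.

Lemma prod_centered (X Y : Type) (xi : convergence X) (tau : convergence Y) :
  forall p, prod_lim xi tau (principal p) p.
Proof.
  intros [x y]; split; apply lim_centered.
Qed.

Definition prod_conv (X Y : Type) (xi : convergence X) (tau : convergence Y)
  : convergence (X * Y) :=
  @Convergence _ (prod_lim xi tau) (@prod_isotone _ _ xi tau) (@prod_centered _ _ xi tau).

Definition isolated (X : Type) (xi : convergence X) (x : X) : Prop :=
  forall F, is_filter F -> lim xi F x -> forall A, F A <-> principal x A.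

Definition prime (X : Type) (xi : convergence X) : Prop :=
  forall x y, ~ isolated xi x -> ~ isolated xi y -> x = y.

Definition is_metric (Y : Type) (d : Y -> Y -> R) : Prop :=
  (forall x y, 0 <= d x y) /\
  (forall x y, d x y = 0 <-> x = y) /\
  (forall x y, d x y = d y x) /\
  (forall x y z, d x z <= d x y + d y z).

Definition ball (Y : Type) (d : Y -> Y -> R) (x : Y) (eps : R) : set Y :=
  fun y => d x y < eps.

(** tau is a topology (tau = T tau) induced by a metric: this is exactly the
    statement that tau coincides with the metric convergence of some metric. *)
Definition metrizable_topology (Y : Type) (tau : convergence Y) : Prop :=
  exists d : Y -> Y -> R, is_metric d /\
    forall F x, is_filter F ->
      (lim tau F x <-> forall eps, 0 < eps -> F (ball d x eps)).

(** Epi_{I_1} xi : the coarsest convergence theta on |xi| such that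
    T(xi x tau) = T(theta x tau) for every tau of countable character.
    Defined as the infimum (union of limits) of that class, which is its
    coarsest member (xi itself belongs to the class). *)
Definition epi_class (X : Type) (xi theta : convergence X) : Prop :=
  forall (Y : Type) (tau : convergence Y), countable_character tau ->
    conv_eq (T (prod_conv xi tau)) (T (prod_conv theta tau)).

Definition Epi_lim (X : Type) (xi : convergence X) (F : set X -> Prop) (x : X) : Prop :=
  exists theta : convergence X, epi_class xi theta /\ lim theta F x.

Lemma Epi_isotone (X : Type) (xi : convergence X) : forall F G x, is_filter F -> is_filter G ->
      filter_le F G -> Epi_lim xi F x -> Epi_lim xi G x.
Proof.
  intros F G x HF HG HFG [th [H1 H2]]; exists th; split; auto.
  apply (lim_isotone th) with F; auto.
Qed.

Lemma Epi_centered (X : Type) (xi : convergence X) : forall x, Epi_lim xi (principal x) x.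
Proof.
  intro x; exists xi; split.
  - intros Y tau _; split; intros F p _ H; exact H.
  - apply lim_centered.
Qed.

Definition Epi_I1 (X : Type) (xi : convergence X) : convergence X :=
  @Convergence _ (Epi_lim xi) (@Epi_isotone _ xi) (@Epi_centered _ xi).

Definition countable_S0_character (X : Type) (xi : convergence X) : Prop :=
  exists sigma : convergence X,
    pretopology sigma /\ countable_character sigma /\
    conv_ge sigma xi /\ conv_ge xi (T sigma).

Definition strongly_countably_S0_characterized (X : Type) (xi : convergence X) : Prop :=
  exists sigma : convergence X,
    pretopology sigma /\ countable_character sigma /\
    conv_ge sigma xi /\ conv_ge xi (Epi_I1 sigma).

(* Main.v *)
Require Import Defs.
From Stdlib Require Import Reals Classical ClassicalEpsilon Lia Lra Cantor.

Set Implicit Arguments.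
Unset Strict Implicit.
Open Scope R_scope.

Lemma filter_true X (F : set X -> Prop) : is_filter F -> F (fun _ => True).
Proof. intros [h _]; exact h. Qed.
Lemma filter_and X (F : set X -> Prop) A B : is_filter F -> F A -> F B -> F (fun x => A x /\ B x).
Proof. intros [_ [h _]]; apply h. Qed.
Lemma filter_up X (F : set X -> Prop) (A B : set X) : is_filter F -> F A -> (forall x, A x -> B x) -> F B.
Proof. intros [_ [_ [h _]]]; apply h. Qed.
Lemma filter_proper X (F : set X -> Prop) : is_filter F -> ~ F (fun _ => False).
Proof. intros [_ [_ [_ h]]]; exact h. Qed.
Lemma filter_nonempty X (F : set X -> Prop) A : is_filter F -> F A -> exists x, A x.
Proof.
  intros HF HA. destruct (classic (exists x, A x)) as [h|h]; auto.
  exfalso. apply (filter_proper HF). apply filter_up with A; auto.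
  intros x Ax; apply h; exists x; auto.
Qed.

Lemma vicinity_filter X (xi : convergence X) x : is_filter (vicinity xi x).
Proof.
  unfold is_filter, vicinity; cbv beta; split; [|split; [|split]].
  - intros F HF _; apply filter_true; auto.
  - intros A B HA HB F HF Hl; apply filter_and; [exact HF|apply HA|apply HB]; auto.
  - intros A B HA HAB F HF Hl; apply filter_up with A; [exact HF|apply HA; auto|exact HAB].
  - intro H. exact (H (principal x) (principal_filter x) (lim_centered xi x)).
Qed.

Lemma vicinity_principal X (xi : convergence X) x A : vicinity xi x A -> A x.
Proof. intro H. exact (H (principal x) (principal_filter x) (lim_centered xi x)). Qed.

Definition prodF X Y (F : set X -> Prop) (G : set Y -> Prop) : set (X * Y) -> Prop :=
  fun S => exists A B, F A /\ G B /\ forall p, A (fst p) -> B (snd p) -> S p.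

Lemma prodF_filter X Y (F : set X -> Prop) (G : set Y -> Prop) :
  is_filter F -> is_filter G -> is_filter (prodF F G).
Proof.
  intros HF HG. unfold is_filter, prodF; split; [|split; [|split]].
  - exists (fun _ => True), (fun _ => True); repeat split; try apply filter_true; auto.
  - intros S1 S2 [A1 [B1 [h1 [h2 h3]]]] [A2 [B2 [k1 [k2 k3]]]].
    exists (fun x => A1 x /\ A2 x), (fun y => B1 y /\ B2 y).
    split; [apply filter_and; auto|]. split; [apply filter_and; auto|].
    intros p [a1 a2] [b1 b2]; split; auto.
  - intros S1 S2 [A1 [B1 [h1 [h2 h3]]]] hs. exists A1, B1; split; auto.
  - intros [A [B [h1 [h2 h3]]]].
    destruct (filter_nonempty HF h1) as [a Ha]. destruct (filter_nonempty HG h2) as [b Hb].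
    exact (h3 (a, b) Ha Hb).
Qed.

Lemma prodF_lim X Y (a : convergence X) (b : convergence Y) F G x y :
  is_filter F -> is_filter G -> lim a F x -> lim b G y -> lim (prod_conv a b) (prodF F G) (x, y).
Proof.
  intros HF HG H1 H2. split; simpl.
  - apply (lim_isotone a) with F; auto. apply image_is_filter, prodF_filter; auto.
    intros A HA. exists A, (fun _ => True). split; auto. split; [apply filter_true; auto|]. auto.
  - apply (lim_isotone b) with G; auto. apply image_is_filter, prodF_filter; auto.
    intros B HB. exists (fun _ => True), B. split; [apply filter_true; auto|]. split; auto.
Qed.

Lemma prodF_le X Y (K : set (X * Y) -> Prop) F G : is_filter K ->
  filter_le F (image_filter fst K) -> filter_le G (image_filter snd K) -> filter_le (prodF F G) K.
Proof.
  intros HK h1 h2 S [A [B [hA [hB hs]]]].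
  apply filter_up with (fun p => A (fst p) /\ B (snd p)); auto.
  - apply filter_and; auto. apply h1; auto. apply h2; auto.
  - intros p [x y]; auto.
Qed.

Lemma conv_T X (xi : convergence X) F x : is_filter F -> lim xi F x -> T_lim xi F x.
Proof. intros HF Hl O HO Ox. apply HO with x; auto. Qed.

Lemma T_map A B (a : convergence A) (b : convergence B) (f : A -> B) K p :
  (forall K' p', is_filter K' -> lim a K' p' -> lim b (image_filter f K') (f p')) ->
  T_lim a K p -> T_lim b (image_filter f K) (f p).
Proof.
  intros Hc HT O HO Op. apply (HT (fun q => O (f q))); auto.
  intros K' p' HK' Hl Op'. exact (HO _ _ (image_is_filter f HK') (Hc _ _ HK' Hl) Op').
Qed.

Lemma hausdorff_ge X (a b : convergence X) : conv_ge a b -> hausdorff b -> hausdorff a.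
Proof. intros Hg Hh F x y HF H1 H2. apply (Hh F); auto. Qed.

Lemma haus_avoid X (xi : convergence X) F x z : hausdorff xi -> is_filter F -> lim xi F x ->
  z <> x -> F (fun w => w <> z).
Proof.
  intros Hh HF Hl Hz. destruct (classic (F (fun w => w <> z))) as [h|Hn]; auto.
  exfalso. apply Hz. apply (Hh (principal z)); [apply principal_filter|apply lim_centered|].
  apply (lim_isotone xi) with F; auto. apply principal_filter.
  intros A HA. unfold principal. destruct (classic (A z)) as [h|h]; auto.
  exfalso. apply Hn. apply filter_up with A; auto. intros w Aw e; subst; auto.
Qed.

Lemma mono_le X (D : nat -> set X) : (forall n z, D n z -> D (S n) z) ->
  forall m j z, (m <= j)%nat -> D m z -> D j z.
Proof. intros Hm m j z Hle. induction Hle; auto. Qed.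

Definition Ecum X (B : nat -> set X) (n : nat) : set X := fun y => forall k, (k <= n)%nat -> B k y.

Lemma Ecum_mem X (H : set X -> Prop) B : is_filter H ->
  (forall A, H A <-> exists n, forall x, B n x -> A x) -> forall n, H (Ecum B n).
Proof.
  intros Hf HB. assert (hb : forall n, H (B n)) by (intro n; apply HB; exists n; auto).
  induction n.
  - apply filter_up with (B 0%nat); auto. intros y Hy k Hk. replace k with 0%nat by lia. auto.
  - apply filter_up with (fun y => Ecum B n y /\ B (S n) y); [auto| |]. apply filter_and; auto.
    intros y [h1 h2] k Hk. destruct (Nat.eq_dec k (S n)) as [->|hne]; auto. apply h1; lia.
Qed.

Lemma Ecum_le X (B : nat -> set X) m n y : (m <= n)%nat -> Ecum B n y -> Ecum B m y.
Proof. intros h H k hk. apply H; lia. Qed.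

Lemma Ecum_sub X (B : nat -> set X) n y : Ecum B n y -> B n y.
Proof. intro H. apply H; lia. Qed.

Lemma vic_cb X (k : convergence X) p : pretopology k -> countable_character k ->
  countably_based (vicinity k p).
Proof.
  intros Hp Hc. destruct (proj1 Hc _ _ (vicinity_filter k p) (Hp p)) as [H [HHf [[B HB] [HHle HHl]]]].
  exists B. intro A. split.
  - intro HA. apply HB. apply HA; auto.
  - intro Hn. apply HHle. apply HB; auto.
Qed.

Lemma image_cb X Y (f : X -> Y) (H : set X -> Prop) : countably_based H -> countably_based (image_filter f H).
Proof.
  intros [B HB]. exists (fun n y => exists q, B n q /\ f q = y). intro A. unfold image_filter. split.
  - intro HA. destruct (proj1 (HB _) HA) as [n hn]. exists n. intros y [q [hq <-]]. auto.
  - intros [n hn]. apply HB. exists n. intros q hq. apply hn. exists q; auto.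
Qed.

Lemma prod_pretop X Y (a : convergence X) (b : convergence Y) :
  pretopology a -> pretopology b -> pretopology (prod_conv a b).
Proof.
  intros Ha Hb [x y]. split; simpl.
  - apply (lim_isotone a) with (vicinity a x); auto. apply vicinity_filter.
    apply image_is_filter, vicinity_filter.
    intros A HA K HK [H1 _]. exact (HA _ (image_is_filter fst HK) H1).
  - apply (lim_isotone b) with (vicinity b y); auto. apply vicinity_filter.
    apply image_is_filter, vicinity_filter.
    intros A HA K HK [_ H2]. exact (HA _ (image_is_filter snd HK) H2).
Qed.

Lemma cc_back X (a : convergence X) : conv_ge (I1 a) a.
Proof. intros F x HF [H [h1 [h2 [h3 h4]]]]. apply (lim_isotone a) with H; auto. Qed.

Lemma prod_cc X Y (a : convergence X) (b : convergence Y) :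
  countable_character a -> countable_character b -> countable_character (prod_conv a b).
Proof.
  intros Ha Hb. split; [|apply cc_back].
  intros K [x y] HK [H1 H2].
  destruct (proj1 Ha _ _ (image_is_filter fst HK) H1) as [H [HHf [[B HB] [HHle HHl]]]].
  destruct (proj1 Hb _ _ (image_is_filter snd HK) H2) as [G [HGf [[C HC] [HGle HGl]]]].
  exists (prodF H G). split; [apply prodF_filter; auto|]. split; [|split].
  - exists (fun k q => B (fst (of_nat k)) (fst q) /\ C (snd (of_nat k)) (snd q)).
    intro A; split.
    + intros [A1 [A2 [h1 [h2 hs]]]]. destruct (proj1 (HB A1) h1) as [n hn].
      destruct (proj1 (HC A2) h2) as [m hm].
      exists (to_nat (n, m)). rewrite cancel_of_to. intros q [q1 q2]; apply hs; auto.
    + intros [k hk]. exists (B (fst (of_nat k))), (C (snd (of_nat k))).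
      split; [apply HB; eauto|]. split; [apply HC; eauto|]. intros q h1 h2; apply hk; auto.
  - apply prodF_le; auto.
  - apply prodF_lim; auto.
Qed.

Definition Pcond X (sigma : convergence X) (F : set X -> Prop) (x : X) : Prop :=
  forall D : nat -> set X, (forall n z, D n z -> D (S n) z) ->
    (forall z, (exists n, D n z) -> exists n, vicinity sigma z (D n)) ->
    (exists n, D n x) -> exists n, F (D n).

Lemma K1 X (sigma theta : convergence X) :
  pretopology sigma -> conv_ge sigma theta ->
  (forall F x, is_filter F -> lim theta F x -> Pcond sigma F x) ->
  epi_class sigma theta.
Proof.
  intros Hpre Hge HP Y rho Hrho. split.
  - intros K p HK HT O HO Op. apply HT; auto.
    intros K' p' HK' [H1 H2] Op'. apply (HO K' p'); auto. split; auto. apply Hge; auto.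
    apply image_is_filter; auto.
  - intros K p HK HT O HO Op. apply HT; auto.
    clear K p HK HT Op.
    intros K [x y] HK [H1 H2] Oxy. simpl in H1, H2.
    destruct (proj1 Hrho _ _ (image_is_filter snd HK) H2) as [H [HHf [[B HB] [HHle HHl]]]].
    pose (E := Ecum B).
    pose (D := fun n x' => O (x', y) /\ forall y', E n y' -> O (x', y')).
    assert (key : forall z, O (z, y) -> exists k, vicinity sigma z (D k)).
    { intros z Oz.
      destruct (HO (prodF (vicinity sigma z) H) (z, y)
        (prodF_filter (vicinity_filter _ _) HHf)
        (prodF_lim (vicinity_filter _ _) HHf (Hpre z) HHl) Oz) as [A [B' [HA [HB' Hsub]]]].
      destruct (proj1 (HB B') HB') as [k Hk].
      destruct (HO (prodF (vicinity sigma z) (principal y)) (z, y)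
        (prodF_filter (vicinity_filter _ _) (principal_filter y))
        (prodF_lim (vicinity_filter _ _) (principal_filter y) (Hpre z) (lim_centered rho y)) Oz)
        as [A' [B'' [HA' [HB'' Hsub']]]].
      exists k. apply filter_up with (fun w => A w /\ A' w).
      apply vicinity_filter. apply filter_and; auto. apply vicinity_filter.
      intros w [Aw A'w]. split. apply (Hsub' (w, y)); auto.
      intros y' Ey'. apply (Hsub (w, y')); auto; try (apply Hk; apply Ecum_sub; exact Ey'). }
    assert (Hmono : forall n z, D n z -> D (S n) z).
    { intros n z [h1 h2]. split; auto. intros y' Ey'. apply h2. apply Ecum_le with (S n); auto. }
    assert (Hvic : forall z, (exists n, D n z) -> exists n, vicinity sigma z (D n)).
    { intros z [n [h _]]. apply key; auto. }
    assert (Hx : exists n, D n x).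
    { destruct (key x Oxy) as [k Hk]. exists k. exact (vicinity_principal Hk). }
    destruct (HP _ _ (image_is_filter fst HK) H1 D Hmono Hvic Hx) as [n Hn].
    assert (HE : K (fun p => E n (snd p))) by (apply HHle; apply Ecum_mem; auto).
    apply filter_up with (fun p => D n (fst p) /\ E n (snd p)); [auto| |].
    apply filter_and; auto.
    intros [x' y'] [[_ hd] he]. simpl in *. apply hd; auto.
Qed.

Lemma Pprod X Y (sigma xi : convergence X) (tau : convergence Y) :
  pretopology sigma -> pretopology tau -> countable_character tau ->
  (forall F x, is_filter F -> lim xi F x -> Pcond sigma F x) ->
  forall K p, is_filter K -> lim (prod_conv xi tau) K p -> Pcond (prod_conv sigma tau) K p.
Proof.
  intros Hs Ht Hcc HP K [x y] HK [H1 H2] D Hmono Hvic Hxy. simpl in H1, H2.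
  destruct (proj1 Hcc _ _ (vicinity_filter tau y) (Ht y)) as [H [HHf [[B HB] [HHle HHl]]]].
  assert (Hvh : forall A, vicinity tau y A -> H A) by (intros A HA; apply HA; auto).
  pose (E := Ecum B).
  pose (D' := fun n x' => forall y', E n y' -> D n (x', y')).
  assert (key : forall z m, vicinity (prod_conv sigma tau) (z, y) (D m) -> exists j, vicinity sigma z (D' j)).
  { intros z m Hv.
    destruct (Hv _ (prodF_filter (vicinity_filter sigma z) (vicinity_filter tau y))
      (prodF_lim (vicinity_filter sigma z) (vicinity_filter tau y) (Hs z) (Ht y)))
      as [A [B' [HA [HB' Hsub]]]].
    destruct (proj1 (HB B') (Hvh _ HB')) as [k Hk].
    exists (max m k). apply filter_up with A; auto. apply vicinity_filter.
    intros x' Ax' y' Ey'.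
    apply mono_le with m; [auto|lia|]. apply (Hsub (x', y')); simpl; auto. apply Hk.
    apply Ecum_sub. apply Ecum_le with (max m k); auto. lia. }
  assert (Ey : forall n, E n y).
  { intro n. apply vicinity_principal with tau. apply HHle. apply Ecum_mem; auto. }
  assert (Hmono' : forall n z, D' n z -> D' (S n) z).
  { intros n z Hz y' Ey'. apply Hmono. apply Hz. apply Ecum_le with (S n); auto. }
  assert (Hvic' : forall z, (exists n, D' n z) -> exists n, vicinity sigma z (D' n)).
  { intros z [n Hn]. destruct (Hvic (z, y) (ex_intro _ n (Hn y (Ey n)))) as [m Hm].
    apply key with m; auto. }
  assert (Hx : exists n, D' n x).
  { destruct (Hvic _ Hxy) as [m Hm]. destruct (key x m Hm) as [j Hj].
    exists j. exact (vicinity_principal Hj). }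
  destruct (HP _ _ (image_is_filter fst HK) H1 D' Hmono' Hvic' Hx) as [n Hn].
  assert (HE : K (fun p => E n (snd p))).
  { apply (HHle (E n) (Ecum_mem HHf HB n) _ (image_is_filter snd HK) H2). }
  exists n. apply filter_up with (fun p => D' n (fst p) /\ E n (snd p)).
  auto. apply filter_and; auto.
  intros [x' y'] [h1 h2]; simpl in *; apply h1; auto.
Qed.

Definition Yb (X : Type) := option (nat * (nat -> set X) * X).

Definition wt X (y : Yb X) : R :=
  match y with None => 0 | Some (m, _, _) => / (INR m + 1) end.

Definition dYb X (a b : Yb X) : R :=
  if excluded_middle_informative (a = b) then 0 else wt a + wt b.

Lemma inv_pos n : 0 < / (INR n + 1).
Proof. apply Rinv_0_lt_compat. pose proof (pos_INR n); lra. Qed.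

Lemma inv_anti n m : (n <= m)%nat -> / (INR m + 1) <= / (INR n + 1).
Proof.
  intro h. apply Rinv_le_contravar. pose proof (pos_INR n); lra.
  apply le_INR in h; lra.
Qed.

Lemma inv_S_lt n : / (INR (S n) + 1) < / (INR n + 1).
Proof.
  apply Rinv_lt_contravar. pose proof (pos_INR n); rewrite S_INR; nra.
  rewrite S_INR; lra.
Qed.

Lemma inv_lt_nat k m : / (INR m + 1) < / (INR k + 1) -> (k < m)%nat.
Proof.
  intro h. destruct (Compare_dec.le_lt_dec m k) as [h'|h']; auto. exfalso.
  pose proof (inv_anti h'). lra.
Qed.

Lemma archi eps : 0 < eps -> exists n, / (INR n + 1) < eps.
Proof.
  intro he. destruct (INR_unbounded (/ eps)) as [n hn]. exists n.
  rewrite <- (Rinv_inv eps). apply Rinv_lt_contravar.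
  apply Rmult_lt_0_compat. apply Rinv_0_lt_compat; auto. pose proof (pos_INR n); lra.
  lra.
Qed.

Lemma wt_nonneg X (y : Yb X) : 0 <= wt y.
Proof. destruct y as [[[m D] z]|]; simpl; [left; apply inv_pos | lra]. Qed.

Lemma dYb_eq X (a : Yb X) : dYb a a = 0.
Proof. unfold dYb. destruct (excluded_middle_informative (a = a)); auto. contradiction. Qed.

Lemma dYb_neq X (a b : Yb X) : a <> b -> dYb a b = wt a + wt b.
Proof. intro h. unfold dYb. destruct (excluded_middle_informative (a = b)); auto. contradiction. Qed.

Lemma wt_sum_pos X (a b : Yb X) : a <> b -> 0 < wt a + wt b.
Proof.
  intro h. destruct a as [[[m D] z]|]; destruct b as [[[m' D'] z']|]; simpl.
  - pose proof (inv_pos m); pose proof (inv_pos m'); lra.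
  - pose proof (inv_pos m); lra.
  - pose proof (inv_pos m'); lra.
  - contradiction.
Qed.

Lemma dNS X m (D : nat -> set X) z : dYb None (Some (m, D, z)) = / (INR m + 1).
Proof. rewrite dYb_neq; [simpl; ring | discriminate]. Qed.

Lemma dYb_metric X : is_metric (@dYb X).
Proof.
  split; [|split; [|split]].
  - intros a b. destruct (classic (a = b)) as [<-|h]. rewrite dYb_eq; lra.
    rewrite dYb_neq; auto. pose proof (wt_nonneg a); pose proof (wt_nonneg b); lra.
  - intros a b. split.
    + intro h. destruct (classic (a = b)) as [e|n]; auto. rewrite dYb_neq in h; auto.
      pose proof (wt_sum_pos n); lra.
    + intros <-. apply dYb_eq.
  - intros a b. destruct (classic (a = b)) as [<-|h]; auto.
    rewrite !dYb_neq; auto. lra.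
  - intros x y z. destruct (classic (x = z)) as [<-|hxz].
    + rewrite dYb_eq. destruct (classic (x = y)) as [<-|h]. rewrite dYb_eq; lra.
      rewrite !dYb_neq; auto. pose proof (wt_nonneg x); pose proof (wt_nonneg y); lra.
    + destruct (classic (x = y)) as [<-|hxy]. rewrite dYb_eq; lra.
      destruct (classic (y = z)) as [<-|hyz]. rewrite dYb_eq; lra.
      rewrite !dYb_neq; auto. pose proof (wt_nonneg y); lra.
Qed.

Definition tauYb_lim X (F : set (Yb X) -> Prop) (y : Yb X) : Prop :=
  forall eps, 0 < eps -> F (ball (@dYb X) y eps).

Lemma tauYb_iso X : forall F G (x : Yb X), is_filter F -> is_filter G ->
  filter_le F G -> tauYb_lim F x -> tauYb_lim G x.
Proof. intros F G x _ _ h H eps he. apply h, H, he. Qed.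

Lemma tauYb_cent X : forall (x : Yb X), tauYb_lim (principal x) x.
Proof. intros x eps he. unfold principal, ball. rewrite dYb_eq. auto. Qed.

Definition tauYb X : convergence (Yb X) :=
  @Convergence _ (@tauYb_lim X) (@tauYb_iso X) (@tauYb_cent X).

Lemma tauYb_metrizable X : metrizable_topology (tauYb X).
Proof.
  exists (@dYb X). split. apply dYb_metric. intros F x _. simpl. unfold tauYb_lim. tauto.
Qed.

Lemma ball_iso X (s : nat * (nat -> set X) * X) b :
  dYb (Some s) b < wt (Some s) -> b = Some s.
Proof.
  intro h. destruct (classic (Some s = b)) as [e|n]; auto.
  rewrite dYb_neq in h; auto. pose proof (wt_nonneg b); lra.
Qed.

Lemma wt_some_pos X (s : nat * (nat -> set X) * X) : 0 < wt (Some s).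
Proof. destruct s as [[m D] z]; simpl; apply inv_pos. Qed.

Lemma tau_some X (s : nat * (nat -> set X) * X) (K : set (Yb X) -> Prop) :
  is_filter K -> lim (tauYb X) K (Some s) -> K (fun y => y = Some s).
Proof.
  intros HK Hl. apply filter_up with (ball (@dYb X) (Some s) (wt (Some s))); auto.
  apply Hl. apply wt_some_pos. intros b hb. apply ball_iso; auto.
Qed.

Lemma tauYb_prime X : prime (tauYb X).
Proof.
  assert (iso : forall s, isolated (tauYb X) (Some s)).
  { intros s F HF Hl A. unfold principal. pose proof (tau_some HF Hl) as Hs. split.
    - intro HA. destruct (classic (A (Some s))) as [h|h]; auto. exfalso.
      apply (filter_proper HF). apply filter_up with (fun y => A y /\ y = Some s); [auto| |].
      apply filter_and; auto. intros y [Ay ->]; contradiction.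
    - intro HA. apply filter_up with (fun y => y = Some s); auto. intros y ->; auto. }
  intros a b Ha Hb. destruct a as [s|]; [exfalso; apply Ha, iso|].
  destruct b as [t|]; [exfalso; apply Hb, iso|]. reflexivity.
Qed.

Lemma metr_pretop Y (tau : convergence Y) : metrizable_topology tau -> pretopology tau.
Proof.
  intros [d [Hd Hiff]] y. apply Hiff. apply vicinity_filter.
  intros eps Heps F HF Hl. apply Hiff; auto.
Qed.

Lemma metr_cc Y (tau : convergence Y) : metrizable_topology tau -> countable_character tau.
Proof.
  intros [d [[Hd0 [Hd1 [Hd2 Hd3]]] Hiff]]. split; [|apply cc_back].
  intros F y HF Hl.
  assert (Hyy : d y y = 0) by (apply Hd1; auto).
  pose (H := fun S : set Y => exists n, forall z, d y z < / (INR n + 1) -> S z).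
  assert (HHf : is_filter H).
  { unfold is_filter, H; split; [|split; [|split]].
    - exists 0%nat; auto.
    - intros A B [n hn] [m hm]. exists (max n m). intros z hz. split.
      apply hn. pose proof (inv_anti (Nat.le_max_l n m)); lra.
      apply hm. pose proof (inv_anti (Nat.le_max_r n m)); lra.
    - intros A B [n hn] hab. exists n; auto.
    - intros [n hn]. apply (hn y). rewrite Hyy. apply inv_pos. }
  exists H. split; auto. split; [|split].
  - exists (fun n z => d y z < / (INR n + 1)). intro A. unfold H. tauto.
  - intros S [n hn]. apply filter_up with (ball d y (/ (INR n + 1))); auto.
    apply (proj1 (Hiff F y HF) Hl). apply inv_pos.
  - apply Hiff; auto. intros eps he. destruct (archi he) as [n hn]. exists n.
    intros z hz. unfold ball. lra.
Qed.

Definition Nball X : set (Yb X) -> Prop :=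
  fun S => exists n, forall y, dYb None y < / (INR n + 1) -> S y.
Arguments Nball X : clear implicits.

Lemma Nball_filter X : is_filter (Nball X).
Proof.
  unfold is_filter, Nball; split; [|split; [|split]].
  - exists 0%nat; auto.
  - intros A B [n hn] [m hm]. exists (max n m). intros z hz. split.
    apply hn. pose proof (inv_anti (Nat.le_max_l n m)); lra.
    apply hm. pose proof (inv_anti (Nat.le_max_r n m)); lra.
  - intros A B [n hn] hab. exists n; auto.
  - intros [n hn]. apply (hn None). rewrite dYb_eq. apply inv_pos.
Qed.

Lemma Nball_lim X : lim (tauYb X) (Nball X) None.
Proof.
  intros eps he. destruct (archi he) as [n hn]. exists n. intros y hy. unfold ball. lra.
Qed.

Definition OD X (D : nat -> set X) : set (X * Yb X) := fun q =>
  match snd q with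
  | None => exists n, D n (fst q)
  | Some (m, D', z) => D' = D -> fst q = z -> D m z
  end.

Lemma OD_open X (kappa : convergence (X * Yb X)) (D : nat -> set X) :
  (forall n z, D n z -> D (S n) z) ->
  (forall K p, is_filter K -> lim kappa K p -> lim (tauYb X) (image_filter snd K) (snd p)) ->
  (forall K p z, is_filter K -> lim kappa K p -> z <> fst p -> K (fun q => fst q <> z)) ->
  (forall x, (exists n, D n x) -> exists k, forall K, is_filter K -> lim kappa K (x, None) ->
       K (fun q => D k (fst q))) ->
  conv_open kappa (OD D).
Proof.
  intros Hmono Hsnd Hhaus Hvic K [x [[[m D'] z]|]] HK Hl Ho.
  - assert (Hs : K (fun q => snd q = Some (m, D', z))).
    { exact (tau_some (image_is_filter snd HK) (Hsnd _ _ HK Hl)). }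
    unfold OD in Ho; simpl in Ho.
    destruct (classic (D' = D /\ ~ D m z)) as [[HD HnD] | Hn].
    + assert (hxz : z <> x) by (intro e; apply HnD; apply Ho; auto).
      pose proof (Hhaus K _ z HK Hl hxz) as Hz.
      apply filter_up with (fun q => snd q = Some (m, D', z) /\ fst q <> z); [auto| |].
      apply filter_and; auto.
      intros [x' y'] [Hy Hx]; simpl in *; subst y'. unfold OD; simpl. intros _ e; congruence.
    + apply filter_up with (fun q => snd q = Some (m, D', z)); auto.
      intros [x' y'] Hy; simpl in Hy; subst y'. unfold OD; simpl. intros HD Hx.
      destruct (classic (D m z)) as [h|h]; auto. exfalso; apply Hn; split; auto.
  - unfold OD in Ho; simpl in Ho. destruct (Hvic x Ho) as [k Hk].
    pose proof (Hk K HK Hl) as H1.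
    pose proof (Hsnd K _ HK Hl _ (inv_pos k)) as H2. simpl in H2.
    apply filter_up with (fun q => D k (fst q) /\ ball (@dYb X) None (/ (INR k + 1)) (snd q)); [auto| |].
    apply filter_and; auto.
    intros [x' [[[m' D''] z']|]] [Hd Hb]; simpl in *; unfold OD; simpl.
    + intros -> ->. unfold ball in Hb. rewrite dNS in Hb. apply inv_lt_nat in Hb.
      apply mono_le with k; auto; lia.
    + exists k; auto.
Qed.

Lemma OD_extract X (F : set X -> Prop) D : is_filter F -> prodF F (Nball X) (OD D) ->
  exists n, F (D n).
Proof.
  intros HF [A [B [HA [[n Hn] Hsub]]]].
  exists (S n). apply filter_up with A; auto. intros z Hz.
  assert (Hb : B (Some (S n, D, z))). { apply Hn. rewrite dNS. apply inv_S_lt. }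
  specialize (Hsub (z, Some (S n, D, z)) Hz Hb). unfold OD in Hsub; simpl in Hsub.
  apply Hsub; auto.
Qed.

Lemma K2 X (sigma theta : convergence X) F x :
  hausdorff sigma -> epi_class sigma theta -> is_filter F -> lim theta F x -> Pcond sigma F x.
Proof.
  intros Hh He HF Hl D Hmono Hvic Hx.
  pose proof (metr_cc (tauYb_metrizable X)) as Hcc.
  destruct (He _ _ Hcc) as [_ Hge].
  apply OD_extract; auto.
  assert (HK : is_filter (prodF F (Nball X))) by (apply prodF_filter; auto; apply Nball_filter).
  assert (Hlim : lim (prod_conv theta (tauYb X)) (prodF F (Nball X)) (x, None))
    by (apply prodF_lim; auto; [apply Nball_filter | apply Nball_lim]).
  apply (Hge _ _ HK (conv_T HK Hlim)).
  - apply OD_open; auto.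
    + intros K p HK' [_ H2]; exact H2.
    + intros K p z HK' [H1 _] Hz. exact (haus_avoid Hh (image_is_filter fst HK') H1 Hz).
    + intros x' Hx'. destruct (Hvic x' Hx') as [k Hk]. exists k. intros K HK' [H1 _].
      exact (Hk _ (image_is_filter fst HK') H1).
  - exact Hx.
Qed.

Definition pre_lim X (G : X -> set X -> Prop) (F : set X -> Prop) (x : X) : Prop :=
  filter_le (G x) F.

Lemma pre_iso X (G : X -> set X -> Prop) : forall F F' x, is_filter F -> is_filter F' ->
  filter_le F F' -> pre_lim G F x -> pre_lim G F' x.
Proof. intros F F' x _ _ h1 h2 A HA. apply h1, h2, HA. Qed.

Lemma pre_cent X (G : X -> set X -> Prop) (HG : forall x A, G x A -> A x) :
  forall x, pre_lim G (principal x) x.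
Proof. intros x A HA. unfold principal. apply (HG x A HA). Qed.

Definition pre_conv X (G : X -> set X -> Prop) (HG : forall x A, G x A -> A x) : convergence X :=
  @Convergence _ (pre_lim G) (@pre_iso X G) (@pre_cent X G HG).

Lemma pre_pretop X G HG : pretopology (@pre_conv X G HG).
Proof. intros x A HA F HF Hl. apply Hl, HA. Qed.

Lemma pre_vic X G HG : (forall x, is_filter (G x)) ->
  forall x A, vicinity (@pre_conv X G HG) x A -> G x A.
Proof. intros Gf x A HA. apply HA; auto. intros B HB; exact HB. Qed.

Lemma pre_cc X G HG : (forall x, is_filter (G x)) -> (forall x, countably_based (G x)) ->
  countable_character (@pre_conv X G HG).
Proof.
  intros Gf Gcb. split; [|apply cc_back].
  intros F x HF Hl. exists (G x). split; auto. split; auto. split; auto.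
  intros B HB; exact HB.
Qed.

Definition unit_lim (F : set unit -> Prop) (u : unit) : Prop := True.
Lemma unit_iso : forall F G (x : unit), is_filter F -> is_filter G ->
  filter_le F G -> unit_lim F x -> unit_lim G x.
Proof. intros; exact I. Qed.
Lemma unit_cent : forall x : unit, unit_lim (principal x) x.
Proof. intros; exact I. Qed.
Definition unit_conv : convergence unit := @Convergence _ unit_lim unit_iso unit_cent.

Lemma unit_cc : countable_character unit_conv.
Proof.
  split; [|apply cc_back]. intros F u HF _.
  exists (principal tt). split; [apply principal_filter|]. split; [|split].
  - exists (fun _ v => v = tt). intro A; unfold principal; split.
    + intro h; exists 0%nat; intros [] _; exact h.
    + intros [_ h]; apply h; reflexivity.
  - intros A HA. apply filter_up with (fun _ => True); [auto|apply filter_true; auto|].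
    intros [] _; exact HA.
  - exact I.
Qed.

Lemma Epi_T X (sigma : convergence X) : conv_ge (Epi_I1 sigma) (T sigma).
Proof.
  intros F x HF [theta [Hth Hl]].
  destruct (Hth unit unit_conv unit_cc) as [_ Hge].
  pose (K := image_filter (fun z => (z, tt)) F).
  assert (HK : is_filter K) by (apply image_is_filter; auto).
  assert (Hlk : lim (prod_conv theta unit_conv) K (x, tt)) by (split; [exact Hl | exact I]).
  pose proof (Hge K (x, tt) HK (conv_T HK Hlk)) as HT.
  exact (@T_map _ _ (prod_conv sigma unit_conv) sigma fst K (x, tt) (fun K' p HK' Hl' => proj1 Hl') HT).
Qed.

Lemma one_to_two X (xi : convergence X) : hausdorff xi -> strongly_countably_S0_characterized xi ->
  forall Y (tau : convergence Y), pretopology tau -> countable_character tau ->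
    strongly_countably_S0_characterized (prod_conv xi tau).
Proof.
  intros Hh [sigma [Hsp [Hsc [Hsx Hxe]]]] Y tau Htp Htc.
  assert (Hge : conv_ge (prod_conv sigma tau) (prod_conv xi tau)).
  { intros K p HK [H1 H2]. split; auto. apply Hsx; auto. apply image_is_filter; auto. }
  exists (prod_conv sigma tau). split; [apply prod_pretop; auto|].
  split; [apply prod_cc; auto|]. split; [exact Hge|].
  intros K p HK Hl. exists (prod_conv xi tau). split; [|exact Hl].
  apply K1; [apply prod_pretop; auto | exact Hge |].
  apply Pprod; auto. intros F x HF Hlx. destruct (Hxe F x HF Hlx) as [theta [Hth Hlt]].
  apply K2 with theta; auto. apply hausdorff_ge with xi; auto.
Qed.

Lemma three_to_one X (xi : convergence X) : hausdorff xi ->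
  (forall Y (tau : convergence Y), prime tau -> metrizable_topology tau ->
     countable_S0_character (prod_conv xi tau)) ->
  strongly_countably_S0_characterized xi.
Proof.
  intros Hh H3.
  destruct (H3 (Yb X) (tauYb X) (@tauYb_prime X) (@tauYb_metrizable X))
    as [k [Hkp [Hkc [Hkge Hkt]]]].
  pose (G := fun x => image_filter fst (vicinity k (x, None))).
  assert (HG : forall x A, G x A -> A x) by (intros x A HA; exact (vicinity_principal HA)).
  assert (Gf : forall x, is_filter (G x)) by (intro x; apply image_is_filter, vicinity_filter).
  assert (Gcb : forall x, countably_based (G x)) by (intro x; apply image_cb, vic_cb; auto).
  pose (sigma := @pre_conv X G HG).
  assert (Hsx : conv_ge sigma xi).
  { intros F x HF Hl.
    destruct (Hkge _ _ (vicinity_filter k (x, None)) (Hkp (x, None))) as [H1 _].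
    apply (lim_isotone xi) with (G x); auto. }
  exists sigma. split; [apply pre_pretop|]. split; [apply pre_cc; auto|]. split; [exact Hsx|].
  intros F x HF Hl. exists xi. split; [|exact Hl].
  apply K1; [apply pre_pretop | exact Hsx |].
  intros F0 x0 HF0 Hl0 D Hmono Hvic Hx0.
  apply OD_extract; auto.
  assert (HK : is_filter (prodF F0 (Nball X))) by (apply prodF_filter; auto; apply Nball_filter).
  assert (Hlim : lim (prod_conv xi (tauYb X)) (prodF F0 (Nball X)) (x0, None))
    by (apply prodF_lim; auto; [apply Nball_filter | apply Nball_lim]).
  apply (Hkt _ _ HK Hlim).
  - apply OD_open; auto.
    + intros K p HK' Hl'. exact (proj2 (Hkge _ _ HK' Hl')).
    + intros K p z HK' Hl' Hz.
      exact (haus_avoid Hh (image_is_filter fst HK') (proj1 (Hkge _ _ HK' Hl')) Hz).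
    + intros x' Hx'. destruct (Hvic x' Hx') as [j Hj]. exists j. intros K HK' Hl'.
      apply (pre_vic (HG := HG) Gf) in Hj. exact (Hj K HK' Hl').
  - exact Hx0.
Qed.

Theorem theorem5p5 (X : Type) (xi : convergence X) :
  hausdorff xi ->
  (strongly_countably_S0_characterized xi <->
     (forall (Y : Type) (tau : convergence Y),
        pretopology tau -> countable_character tau ->
        strongly_countably_S0_characterized (prod_conv xi tau))) /\
  (strongly_countably_S0_characterized xi <->
     (forall (Y : Type) (tau : convergence Y),
        prime tau -> metrizable_topology tau ->
        countable_S0_character (prod_conv xi tau))).
Proof.
  intro Hh.
  pose proof (one_to_two Hh) as h12.
  assert (h23 : (forall (Y : Type) (tau : convergence Y), pretopology tau -> countable_character tau ->
                   strongly_countably_S0_characterized (prod_conv xi tau)) ->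
                forall (Y : Type) (tau : convergence Y), prime tau -> metrizable_topology tau ->
                   countable_S0_character (prod_conv xi tau)).
  { intros H2 Y tau _ Hm.
    destruct (H2 Y tau (metr_pretop Hm) (metr_cc Hm)) as [s [a [b [c d]]]].
    exists s. split; auto. split; auto. split; auto.
    intros F p HF Hl. apply Epi_T; auto. }
  pose proof (three_to_one Hh) as h31.
  split; split; auto.
Qed.
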